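(* Let $G$ be a finite connected graph with vertices $u,v$ such that $uv\in E(G)$, $\deg_G(u)\ge 2$ and $\deg_G(v)=1$. Let $G_v$ be obtained from $G$ by adding a new vertex $x$ and the edge $ux$. Then $\mathrm{cat}(G_v,a)=\mathrm{cat}(G,a)$ for all $a\in V(G)$, and $\mathrm{cat}(G_v,x)=1$. In particular $\mathrm{cat}(G_v)=\mathrm{cat}(G)$.
   Context: Cat Herding is played on a simple graph $G$. The cat first places its token on a vertex. Then the players alternate, the herder moving first: the herder deletes one edge of the current graph, and then, unless the cat's current vertex has degree $0$ in the current graph, the cat moves its token along a path with at least one edge in the current graph to a different vertex. The cat is captured when its vertex has degree $0$ in the current graph, and the game ends; the score is the number of edges deleted. For a finite graph $G$ and $v\in V(G)$, $\mathrm{cat}(G,v)$ is the score under optimal play (herder minimizing, cat maximizing) when the cat starts at $v$, and $\mathrm{cat}(G)=\max_{v}\mathrm{cat}(G,v)$. *)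

(* Defs.v *)
From mathcomp Require Import all_boot.
Set Implicit Arguments. Unset Strict Implicit. Unset Printing Implicit Defensive.

(* A finite simple graph on vertex type T is given by its edge set
   E : {set {set T}}, every edge being a 2-element subset of T. *)
Section CatHerding.
Variable T : finType.

Definition simple_graph (E : {set {set T}}) : Prop :=
  forall e, e \in E -> #|e| = 2.

Definition adj (E : {set {set T}}) : rel T := fun x y => [set x; y] \in E.

Definition deg (E : {set {set T}}) (c : T) : nat := #|[set e in E | c \in e]|.

Definition connected_graph (E : {set {set T}}) : Prop :=
  forall x y : T, connect (adj E) x y.

(* Game value with fuel n (n = number of edges of the current graph).
   State: current edge set E, cat at c, herder to move.
   - if c has degree 0 the cat is captured: score 0;
   - otherwise the herder picks an edge e of E (minimizing), deletes it
     (this counts 1), and then the cat (maximizing) moves to any vertex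
     c' <> c connected to c in E minus e; if there is no such c' (i.e.
     c has become isolated) the game ends (empty max = 0).
   The min is taken with neutral element #|E|, which is an upper bound
   for every term (the score never exceeds the number of edges), and the
   range is nonempty whenever deg E c > 0. *)
Fixpoint catv (n : nat) (E : {set {set T}}) (c : T) : nat :=
  match n with
  | 0 => 0
  | n'.+1 =>
    if deg E c == 0 then 0 else
    \big[minn/#|E|]_(e in E)
       (1 + \max_(c' | connect (adj (E :\ e)) c c' && (c' != c))
               catv n' (E :\ e) c')
  end.

Definition cat_num (E : {set {set T}}) (v : T) : nat := catv #|E| E v.

Definition catG (E : {set {set T}}) : nat := \max_(v : T) cat_num E v.

End CatHerding.

(* G_v : add a new vertex x = None to G (vertex type option T) joined to u. *)
Definition add_leaf (T : finType) (E : {set {set T}}) (u : T)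
  : {set {set option T}} :=
  (fun e : {set T} => (@Some T) @: e) @: E :|: [set [set Some u; None]].

(* Main.v *)
Require Import Defs.
From mathcomp Require Import all_boot.
Set Implicit Arguments. Unset Strict Implicit. Unset Printing Implicit Defensive.

Lemma bigmin_le_seq (I : eqType) (r : seq I) (P : pred I) (F : I -> nat) d i :
  i \in r -> P i -> \big[minn/d]_(j <- r | P j) F j <= F i.
Proof.
elim: r => //= a r IH; rewrite inE big_cons; case/orP => [/eqP-> Pi|ir Pi].
  by rewrite Pi geq_minl.
by case: ifP => _; [rewrite geq_min IH ?orbT | exact: IH].
Qed.

Lemma bigmin_le (I : finType) (P : pred I) (F : I -> nat) d i :
  P i -> \big[minn/d]_(j | P j) F j <= F i.
Proof. by apply: bigmin_le_seq; rewrite mem_index_enum. Qed.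

Lemma bigmin_le_idx (I : finType) (P : pred I) (F : I -> nat) d :
  \big[minn/d]_(j | P j) F j <= d.
Proof.
elim: (index_enum I) => [|a r IH]; first by rewrite big_nil.
by rewrite big_cons; case: ifP => // _; rewrite geq_min IH orbT.
Qed.

Section Basic.
Variable T : finType.
Implicit Types (E F : {set {set T}}) (c y : T).

Definition V E c := \max_(c' | connect (adj E) c c' && (c' != c)) cat_num E c'.

Lemma deg_le_card E c : deg E c <= #|E|.
Proof. by rewrite /deg; apply: subset_leq_card; apply/subsetP=> e; rewrite inE => /andP[]. Qed.

Lemma deg0P E c : reflect (forall e, e \in E -> c \notin e) (deg E c == 0).
Proof.
rewrite /deg cards_eq0; apply: (iffP eqP) => [H e eE|H].
  apply/negP => ce.
  have : e \in [set e in E | c \in e] by rewrite inE eE ce.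
  by rewrite H inE.
apply/setP=> e; rewrite !inE; apply/negP=> /andP[eE ce].
by move: (H e eE); rewrite ce.
Qed.

Lemma W_unfold E c : cat_num E c =
  if deg E c == 0 then 0 else \big[minn/#|E|]_(e in E) (1 + V (E :\ e) c).
Proof.
rewrite /cat_num; case Hn: #|E| => [|n] /=.
  by have := deg_le_card E c; rewrite Hn leqn0 => ->.
case: ifP => // _; rewrite Hn; apply: eq_bigr => e eE.
have Hc : #|E :\ e| = n by move: (cardsD1 e E); rewrite eE Hn add1n => -[].
by rewrite /V /cat_num Hc.
Qed.

Lemma W_deg0 E c : deg E c = 0 -> cat_num E c = 0.
Proof. by rewrite W_unfold => ->. Qed.

Lemma W_le_term E c e : e \in E -> cat_num E c <= 1 + V (E :\ e) c.
Proof.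
move=> eE; rewrite W_unfold; case: ifP => // _.
exact: bigmin_le.
Qed.

Lemma V_le E c m : (forall y, connect (adj E) c y -> y != c -> cat_num E y <= m) -> V E c <= m.
Proof. by move=> H; apply/bigmax_leqP => y /andP[]; apply: H. Qed.

Lemma V_ge E c y : connect (adj E) c y -> y != c -> cat_num E y <= V E c.
Proof. by move=> H1 H2; apply: (leq_bigmax_cond (P := fun y => connect (adj E) c y && (y != c))); rewrite H1. Qed.


Lemma W_le_card E c : cat_num E c <= #|E|.
Proof.
rewrite W_unfold; case: ifP => // _.
exact: bigmin_le_idx.
Qed.

Lemma V_le_card E c : V E c <= #|E|.
Proof. by apply: V_le => y _ _; apply: W_le_card. Qed.

Lemma W_ex E c : deg E c != 0 ->
  exists2 e, e \in E & cat_num E c = 1 + V (E :\ e) c.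
Proof.
move=> Hd.
have [e0 e0E] : exists e0, e0 \in E.
  case: (pickP (mem E)) => [e eE|H]; first by exists e.
  by move: Hd; case: deg0P => // -[] e; rewrite [e \in E]H.
case: (arg_minnP (fun e => 1 + V (E :\ e) c) e0E) => e eE Hmin.
have {}eE : e \in E by [].
exists e => //; rewrite W_unfold (negbTE Hd); apply/eqP; rewrite eqn_leq.
rewrite bigmin_le //=.
apply: (big_ind (fun m => 1 + V (E :\ e) c <= m)).
- by rewrite [#|E|](cardsD1 e) eE leq_add2l V_le_card.
- by move=> a b Ha Hb; rewrite leq_min Ha Hb.
- by move=> i iE; apply: Hmin.
Qed.

Lemma W_pos E c : deg E c != 0 -> 0 < cat_num E c.
Proof. by case/W_ex=> e _ ->. Qed.

Lemma connect_ind_gen (e : rel T) (P : T -> Prop) a :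
  P a -> (forall y z, P y -> e y z -> P z) -> forall b, connect e a b -> P b.
Proof.
move=> Pa step b /connectP [p pth ->]; elim: p a Pa pth => //= y p IH a Pa.
by case/andP=> eay pth; apply: IH pth; apply: step eay.
Qed.

Lemma connect_mono E1 E2 a b : E1 \subset E2 ->
  connect (adj E1) a b -> connect (adj E2) a b.
Proof.
move=> sE; apply: (connect_ind_gen (P := fun b => connect (adj E2) a b)) => [|y z ay yz]; first exact: connect0.
by apply: connect_trans ay (connect1 _); move: yz; rewrite /adj => /(subsetP sE).
Qed.

Lemma adj_sym E : symmetric (adj E).
Proof. by move=> a b; rewrite /adj setUC. Qed.

Lemma connect_symE E a b : connect (adj E) a b = connect (adj E) b a.
Proof. exact: (sym_connect_sym (adj_sym E) a b). Qed.

Lemma connect_iso E y b : (forall z, ~~ adj E y z) -> connect (adj E) y b -> b = y.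
Proof.
move=> H; apply: (connect_ind_gen (P := fun b => b = y)) => // a z -> yz.
by move: (H z); rewrite yz.
Qed.

Lemma deg_D1 E f c : deg E c == 0 -> deg (E :\ f) c == 0.
Proof. by move/deg0P=> H; apply/deg0P => e; rewrite inE => /andP[_ /H]. Qed.

Lemma setDD1C E e f : E :\ f :\ e = E :\ e :\ f.
Proof. by apply/setP=> z; rewrite !inE andbCA. Qed.

Lemma subD1 E e : E :\ e \subset E.
Proof. exact: subsetDl. Qed.

Lemma V_mono E1 E2 c : E1 \subset E2 ->
  (forall z, cat_num E1 z <= cat_num E2 z) -> V E1 c <= V E2 c.
Proof.
move=> sE H; apply: V_le => z cz zc; apply: leq_trans (H z) _.
by apply: V_ge => //; apply: connect_mono cz.
Qed.

Lemma deg_edge E c : deg E c != 0 -> exists2 e, e \in E & c \in e.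
Proof.
rewrite /deg cards_eq0 => /set0Pn [e]; rewrite inE => /andP[eE ce].
by exists e.
Qed.

Lemma MB n : forall E, #|E| <= n ->
  (forall f y, f \in E -> cat_num (E :\ f) y <= cat_num E y) /\
  (forall c, deg E c != 0 -> cat_num E c <= 1 + V E c).
Proof.
elim: n => [|n IH] E HE.
  have E0 : E = set0 by apply/eqP; rewrite -cards_eq0 -leqn0.
  split=> [f y|c]; first by rewrite E0 inE.
  by have := deg_le_card E c; rewrite E0 cards0 leqn0 => ->.
have Hsm f : f \in E -> #|E :\ f| <= n.
  by move=> fE; move: HE; rewrite (cardsD1 f) fE.
have Mono : forall f y, f \in E -> cat_num (E :\ f) y <= cat_num E y.
  move=> f y fE.
  case: (boolP (deg (E :\ f) y == 0)) => [/eqP/W_deg0 -> //|Hd].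
  have Hd' : deg E y != 0 by apply: contra Hd; apply: deg_D1.
  case: (W_ex Hd') => e eE ->.
  case: (eqVneq e f) => [-> | ef].
    by case: (IH _ (Hsm f fE)) => _ /(_ y Hd).
  have eEf : e \in E :\ f by rewrite !inE ef.
  apply: leq_trans (W_le_term _ eEf) _; rewrite leq_add2l.
  apply: V_mono; first by rewrite setDD1C; apply: subD1.
  move=> z; rewrite setDD1C; case: (IH _ (Hsm e eE)) => + _; apply.
  by rewrite !inE eq_sym ef.
split=> // c Hd.
have [e eE ce] := deg_edge Hd.
apply: leq_trans (W_le_term c eE) _; rewrite leq_add2l.
apply: V_mono; first exact: subD1.
by move=> z; apply: Mono.
Qed.

Lemma Mono E f y : f \in E -> cat_num (E :\ f) y <= cat_num E y.
Proof. by case: (MB (leqnn #|E|)) => H _; apply: H. Qed.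

Lemma Bpass E c : deg E c != 0 -> cat_num E c <= 1 + V E c.
Proof. by case: (MB (leqnn #|E|)) => _ H; apply: H. Qed.

Lemma V_pos E c z : connect (adj E) c z -> z != c -> deg E z != 0 -> 0 < V E c.
Proof. by move=> cz zc dz; apply: leq_trans (V_ge cz zc); apply: W_pos. Qed.

Lemma deg_in E e c : e \in E -> c \in e -> deg E c != 0.
Proof. by move=> eE ce; apply/negP=> /deg0P /(_ e eE); rewrite ce. Qed.

Lemma leafcap E e c : e \in E -> c \in e -> (forall f, f \in E -> c \in f -> f = e) ->
  cat_num E c <= 1.
Proof.
move=> eE ce H; apply: leq_trans (W_le_term c eE) _.
suff -> : V (E :\ e) c = 0 by [].
apply/eqP; rewrite -leqn0; apply: V_le => z cz zc; exfalso; move/eqP: zc; apply.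
apply: connect_iso cz => t; apply/negP; rewrite /adj !inE => /andP[ne fE].
by move: ne; rewrite (H _ fE) ?set21 ?eqxx.
Qed.

Lemma set2_eq (y z u x : T) : [set y; z] = [set u; x] -> u != x ->
  (y = u /\ z = x) \/ (y = x /\ z = u).
Proof.
move=> H ux.
have yin : y \in [set u; x] by rewrite -H set21.
have zin : z \in [set u; x] by rewrite -H set22.
have uin : u \in [set y; z] by rewrite H set21.
have xin : x \in [set y; z] by rewrite H set22.
move: yin zin uin xin; rewrite !inE.
case/orP=> /eqP-> ; case/orP=> /eqP->; rewrite ?eqxx ?orbb //=.
- by move=> _ /eqP xu; move: ux; rewrite xu eqxx.
- by left.
- by right.
- by move=> /eqP ux'; move: ux; rewrite ux' eqxx.
Qed.

Lemma leaf_path E1 E2 u x a : u != x -> (forall e, e \in E1 -> x \notin e) ->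
  (forall e, e \in E2 -> e \in E1 \/ e = [set u; x]) -> a != x ->
  forall b, connect (adj E2) a b ->
  if b == x then connect (adj E1) a u else connect (adj E1) a b.
Proof.
move=> ux fr sub ax.
apply: (connect_ind_gen (P := fun b => if b == x then connect (adj E1) a u else connect (adj E1) a b)).
  by rewrite (negbTE ax) connect0.
move=> y z Py; rewrite /adj => /sub [yzE|yzE].
  have yx : y != x by apply: contraNneq (fr _ yzE) => ->; rewrite set21.
  have zx : z != x by apply: contraNneq (fr _ yzE) => ->; rewrite set22.
  move: Py; rewrite (negbTE yx) (negbTE zx) => ay.
  by apply: connect_trans ay (connect1 _).
move: Py; case: (set2_eq yzE ux) => -[-> ->].
  by rewrite eqxx (negbTE ux).
by rewrite eqxx (negbTE ux).
Qed.

Lemma simple_nb E c : simple_graph E -> deg E c != 0 ->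
  exists2 y, y != c & adj E c y.
Proof.
move=> sE /deg_edge [e eE ce].
have /cards2P [a [b [ab De]]] : #|e| == 2 by rewrite sE.
move: ce eE; rewrite De !inE => /orP[]/eqP-> eE.
  by exists b; rewrite 1?eq_sym.
by exists a => //; rewrite /adj setUC.
Qed.

Lemma setU1D1 (X : finType) (A : {set X}) b e : e != b ->
  (A :|: [set b]) :\ e = (A :\ e) :|: [set b].
Proof.
move=> eb; apply/setP=> z; rewrite !inE; case: (eqVneq z b) => [->|zb].
  by rewrite eq_sym (negbTE eb) !orbT.
by rewrite !orbF.
Qed.

Lemma setU1D1K (X : finType) (A : {set X}) b : b \notin A ->
  (A :|: [set b]) :\ b = A.
Proof.
move=> bA; apply/setP=> z; rewrite !inE; case: (eqVneq z b) => [->|zb].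
  by rewrite (negbTE bA).
by rewrite orbF.
Qed.

Lemma Split n : forall (K : {set {set T}}) u w v y, #|K| <= n -> [set u; w] \in K -> u != w ->
  (forall e, e \in K -> v \notin e) -> v != u -> y != v ->
  cat_num ((K :\ [set u; w]) :|: [set [set u; v]]) y <= cat_num K y.
Proof.
elim: n => [|n IH] K u w v y HK uwK uw frv vu yv.
  by move: HK; rewrite leqn0 cards_eq0 => /eqP K0; move: uwK; rewrite K0 inE.
set R := (K :\ [set u; w]) :|: [set [set u; v]].
have uvK : [set u; v] \notin K by apply/negP => /frv; rewrite set22.
have uvR : [set u; v] \in R by rewrite !inE eqxx orbT.
case: (boolP (deg R y == 0)) => [/eqP/W_deg0 -> //|Hd].
have HdK : deg K y != 0.
  case: (deg_edge Hd) => e; rewrite !inE => /orP[/andP[_ eK] ye|/eqP ee].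
    exact: deg_in eK ye.
  move=> ye; apply: (deg_in uwK); move: ye; rewrite ee !inE => /orP[/eqP->|/eqP yv'].
    by rewrite eqxx.
  by move: yv; rewrite yv' eqxx.
case: (W_ex HdK) => e eK ->.
case: (eqVneq e [set u; w]) => [ee|euw].
  apply: leq_trans (W_le_term y uvR) _; rewrite leq_add2l ee /R setU1D1K //.
  by rewrite inE negb_and uvK orbT.
have eR : e \in R by rewrite !inE euw eK.
apply: leq_trans (W_le_term y eR) _; rewrite leq_add2l.
have euv : e != [set u; v] by apply: contraNneq uvK => <-.
have HRe : R :\ e = ((K :\ e) :\ [set u; w]) :|: [set [set u; v]].
  by rewrite /R setU1D1 // setDD1C.
rewrite HRe; apply: V_le => z yz zy.
have uwKe : [set u; w] \in K :\ e by rewrite !inE eq_sym euw.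
have frv' : forall f, f \in K :\ e -> v \notin f by move=> f; rewrite inE => /andP[_ /frv].
have uv : u != v by rewrite eq_sym.
have fr1 : forall f, f \in (K :\ e) :\ [set u; w] -> v \notin f.
  by move=> f; rewrite inE => /andP[_ /frv'].
have sub1 : forall f, f \in ((K :\ e) :\ [set u; w]) :|: [set [set u; v]] ->
    f \in (K :\ e) :\ [set u; w] \/ f = [set u; v].
  by move=> f; rewrite inE => /orP[H|]; [left|rewrite inE => /eqP; right].
have HP := leaf_path uv fr1 sub1 yv yz.
have sK : (K :\ e) :\ [set u; w] \subset K :\ e by apply: subD1.
case: (eqVneq z v) HP => [->|zv].
  move=> yu.
  have -> : cat_num (((K :\ e) :\ [set u; w]) :|: [set [set u; v]]) v = 1.
    apply/eqP; rewrite eqn_leq; apply/andP; split.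
      apply: (leafcap (e := [set u; v])); rewrite ?inE ?eqxx ?orbT ?set22 //.
      by move=> f; rewrite inE => /orP[/fr1 /negbTE ->|/set1P ->].
    apply: W_pos; apply: (deg_in (e := [set u; v])); rewrite ?inE ?eqxx ?orbT ?set22 //.
  have yu' := connect_mono sK yu.
  case: (eqVneq y u) => [yu2|yu2].
    apply: (V_pos (z := w)).
    - by rewrite yu2; apply: connect1; rewrite /adj.
    - by rewrite yu2 eq_sym.
    - by apply: (deg_in uwKe); rewrite set22.
  apply: (V_pos (z := u)) => //; first by rewrite eq_sym.
  by apply: (deg_in uwKe); rewrite set21.
move=> yz'.
apply: leq_trans (V_ge (connect_mono sK yz') zy).
apply: IH => //.
by move: HK; rewrite (cardsD1 e) eK.
Qed.

Lemma Far n : forall (H : {set {set T}}) u x y, #|H| <= n -> u != x ->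
  (forall e, e \in H -> x \notin e) -> ~~ connect (adj H) y u -> y != x ->
  cat_num (H :|: [set [set u; x]]) y <= cat_num H y.
Proof.
elim: n => [|n IH] H u x y HH ux frx nyu yx.
  move: HH; rewrite leqn0 cards_eq0 => /eqP H0.
  case: (boolP (deg (H :|: [set [set u; x]]) y == 0)) => [/eqP/W_deg0 -> //|Hd].
  case: (deg_edge Hd) => e; rewrite H0 set0U inE => /eqP -> ; rewrite !inE.
  case/orP=> /eqP yy; first by move: nyu; rewrite yy connect0.
  by move: yx; rewrite yy eqxx.
set H2 := H :|: [set [set u; x]].
have uxH : [set u; x] \notin H by apply/negP => /frx; rewrite set22.
case: (boolP (deg H2 y == 0)) => [/eqP/W_deg0 -> //|Hd].
have HdH : deg H y != 0.
  case: (deg_edge Hd) => e; rewrite inE => /orP[eH ye|/set1P ->].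
    exact: deg_in eH ye.
  rewrite !inE => /orP[] /eqP yy; first by move: nyu; rewrite yy connect0.
  by move: yx; rewrite yy eqxx.
case: (W_ex HdH) => e eH ->.
have eH2 : e \in H2 by rewrite inE eH.
apply: leq_trans (W_le_term y eH2) _; rewrite leq_add2l.
have eux : e != [set u; x] by apply: contraNneq uxH => <-.
rewrite /H2 setU1D1 //; apply: V_le => z yz zy.
have fr1 : forall f, f \in H :\ e -> x \notin f by move=> f; rewrite inE => /andP[_ /frx].
have sub1 : forall f, f \in (H :\ e) :|: [set [set u; x]] ->
    f \in H :\ e \/ f = [set u; x].
  by move=> f; rewrite inE => /orP[Hf|/set1P]; [left|right].
have HP := leaf_path ux fr1 sub1 yx yz.
have sH : H :\ e \subset H by apply: subD1.
case: (eqVneq z x) HP => [_ yu|zx yz'].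
  by move: nyu; rewrite (connect_mono sH yu).
apply: leq_trans (V_ge yz' zy); apply: IH => //.
- by move: HH; rewrite (cardsD1 e) eH.
- apply: contra nyu => zu; apply: connect_mono sH _.
  exact: connect_trans yz' zu.
Qed.

Lemma closed_uv E u v c : (forall e, e \in E -> v \in e -> e = [set u; v]) ->
  (forall e, e \in E -> u \in e -> e = [set u; v]) ->
  connect (adj E) u c -> c \in [set u; v].
Proof.
move=> Hv Hu; apply: (connect_ind_gen (P := fun c => c \in [set u; v])); first by rewrite set21.
move=> y z /set2P [] -> Hyz.
  by rewrite -(Hu _ Hyz) ?set22 // set21.
by rewrite -(Hv _ Hyz) ?set22 // set21.
Qed.

Lemma conn_deg E a b : connect (adj E) a b -> a != b -> deg E a != 0.
Proof.
move=> ab; apply: contraNN => /deg0P H; apply/eqP; symmetry; apply: connect_iso ab.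
by move=> z; apply/negP => /H; rewrite set21.
Qed.

Lemma card_U1 (X : finType) (A : {set X}) b : #|A :|: [set b]| <= #|A|.+1.
Proof. by rewrite setUC cardsU1; case: (b \in A). Qed.

Lemma simple_sub E1 E2 : E1 \subset E2 -> simple_graph E2 -> simple_graph E1.
Proof. by move=> sE H e /(subsetP sE) /H. Qed.

Lemma simple_U1 E a b : simple_graph E -> a != b -> simple_graph (E :|: [set [set a; b]]).
Proof.
by move=> H ab e; rewrite inE => /orP[/H //|/set1P ->]; rewrite cards2 ab.
Qed.

Definition Cst (D : {set {set T}}) u v x c :=
  simple_graph D -> [set u; v] \in D -> (forall e, e \in D -> v \in e -> e = [set u; v]) ->
  (forall e, e \in D -> x \notin e) -> u != v -> u != x ->
  c != x -> c != v -> ((c == u) ==> [exists e in D, (u \in e) && (e != [set u; v])]) ->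
  cat_num (D :|: [set [set u; x]]) c <= cat_num D c.

Definition Tst (K : {set {set T}}) u v x c :=
  simple_graph K -> (forall e, e \in K -> v \notin e) -> (forall e, e \in K -> x \notin e) ->
  u != v -> u != x -> v != x -> c != v -> c != x -> deg K c != 0 ->
  cat_num ((K :|: [set [set u; v]]) :|: [set [set u; x]]) c <= 1 + V K c.

Lemma V_one E c : simple_graph E -> deg E c != 0 -> 0 < V E c.
Proof.
move=> sE dc; case: (simple_nb sE dc) => y yc cy.
apply: (V_pos (z := y)) => //; first exact: connect1.
by apply: (deg_in cy); rewrite set22.
Qed.

Lemma T_step n : (forall (D : {set {set T}}) u v x c, #|D| < n -> Cst D u v x c) ->
  forall (K : {set {set T}}) u v x c, #|K|.+1 < n.+1 -> Tst K u v x c.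
Proof.
move=> IHC K u v x c HK sK frv frx uv ux vx cv cx dc.
have frvx : forall e, e \in K :|: [set [set u; v]] -> x \notin e.
  move=> e; rewrite inE => /orP[/frx //|/set1P ->].
  by rewrite !inE negb_or eq_sym ux eq_sym vx.
have subv : forall f, f \in K :|: [set [set u; v]] -> f \in K \/ f = [set u; v].
  by move=> f; rewrite inE => /orP[H|/set1P]; [left|right].
case: (boolP (connect (adj K) c u)) => [cu|ncu].
  have du : deg K u != 0.
    case: (eqVneq c u) => [<- //|cu']; apply: (conn_deg (b := c)); last by rewrite eq_sym.
    by rewrite connect_symE.
  case: (simple_nb sK du) => w wu uwK.
  rewrite /adj in uwK.
  set F := (K :|: [set [set u; v]]) :|: [set [set u; x]].
  have uwF : [set u; w] \in F by rewrite !inE uwK.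
  apply: leq_trans (W_le_term c uwF) _; rewrite leq_add2l.
  have uwuv : [set u; w] != [set u; v] by apply: contraNneq (frv _ uwK) => ->; rewrite set22.
  have uwux : [set u; w] != [set u; x] by apply: contraNneq (frx _ uwK) => ->; rewrite set22.
  rewrite /F !setU1D1 //.
  set D' := (K :\ [set u; w]) :|: [set [set u; v]].
  have sKw : K :\ [set u; w] \subset K by apply: subD1.
  have frvw : forall e, e \in K :\ [set u; w] -> v \notin e by move=> e /(subsetP sKw) /frv.
  have frxD : forall e, e \in D' -> x \notin e.
    move=> e; rewrite inE => /orP[/(subsetP sKw)/frx //|/set1P ->].
    by rewrite !inE negb_or eq_sym ux eq_sym vx.
  have subx : forall f, f \in D' :|: [set [set u; x]] -> f \in D' \/ f = [set u; x].
    by move=> f; rewrite inE => /orP[H|/set1P]; [left|right].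
  have subv' : forall f, f \in D' -> f \in K :\ [set u; w] \/ f = [set u; v].
    by move=> f; rewrite inE => /orP[H|/set1P]; [left|right].
  have uvD : [set u; v] \in D' by rewrite !inE eqxx orbT.
  have uxF : [set u; x] \in D' :|: [set [set u; x]] by rewrite !inE eqxx orbT.
  have Vpos := V_one sK dc.
  apply: V_le => c' cc' c'c.
  have HP := leaf_path ux frxD subx cx cc'.
  case: (eqVneq c' x) HP => [-> _|c'x cc1].
    apply: leq_trans Vpos; apply: (leafcap uxF); first by rewrite set22.
    move=> f; rewrite inE => /orP[/frxD /negbTE -> //|/set1P -> //].
  have HP2 := leaf_path uv frvw subv' cv cc1.
  case: (eqVneq c' v) HP2 => [-> _|c'v cc2].
    apply: leq_trans Vpos; apply: (leafcap (e := [set u; v])); rewrite ?inE ?eqxx ?orbT ?set22 //.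
    move=> f; rewrite inE => /orP[]; last first.
      move/set1P ->; rewrite !inE => /orP[]/eqP vv; first by move: uv; rewrite vv eqxx.
      by move: vx; rewrite vv eqxx.
    rewrite inE => /orP[/frvw /negbTE -> //|/set1P -> //].
  have ccK := connect_mono sKw cc2.
  apply: leq_trans (V_ge ccK c'c).
  have sD' : simple_graph D' by apply: simple_U1 => //; apply: simple_sub sK.
  apply: leq_trans (Split (leqnn _) uwK _ frv _ c'v); last by rewrite eq_sym.
  apply: (IHC D' u v x c') => //.
  - by apply: leq_ltn_trans (card_U1 _ _) _; rewrite -ltnS; apply: leq_ltn_trans HK; rewrite ltnS (cardsD1 [set u; w] K) uwK.
  - by move=> e; rewrite inE => /orP[/frvw/negbTE -> //|/set1P -> //].
  - apply/implyP => /eqP c'u; case: (boolP [exists e in D', (u \in e) && (e != [set u; v])]) => // Hno.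
    have Hu : forall e, e \in D' -> u \in e -> e = [set u; v].
      move=> e eD ue; apply/eqP; apply/negPn/negP => ne; move/negP: Hno; apply.
      by apply/existsP; exists e; rewrite eD ue ne.
    have Hv : forall e, e \in D' -> v \in e -> e = [set u; v].
      by move=> e; rewrite inE => /orP[/frvw/negbTE -> //|/set1P -> //].
    have cuc : connect (adj D') u c by rewrite connect_symE -c'u.
    case/set2P: (closed_uv Hv Hu cuc) => cc.
      by move: c'c; rewrite c'u cc eqxx.
    by move: cv; rewrite cc eqxx.
  - by rewrite eq_sym.
have ncu' : ~~ connect (adj (K :|: [set [set u; v]])) c u.
  apply/negP => H; have := leaf_path uv frv subv cv H.
  by rewrite (negbTE uv) (negbTE ncu).
apply: leq_trans (Far (leqnn _) ux frvx ncu' cx) _.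
apply: leq_trans (Far (leqnn _) uv frv ncu cv) _.
exact: Bpass.
Qed.

Lemma C_step n : (forall (D : {set {set T}}) u v x c, #|D| < n -> Cst D u v x c) ->
  (forall (K : {set {set T}}) u v x c, #|K|.+1 < n.+1 -> Tst K u v x c) ->
  forall (D : {set {set T}}) u v x c, #|D| < n.+1 -> Cst D u v x c.
Proof.
move=> IHC IHT D u v x c HD sD uvD lv frx uv ux cx cv cond.
have vx : v != x by apply: contraNneq (frx _ uvD) => <-; rewrite set22.
set F := D :|: [set [set u; x]].
have uxD : [set u; x] \notin D by apply/negP => /frx; rewrite set22.
case: (boolP (deg F c == 0)) => [/eqP/W_deg0 -> //|dF].
have dD : deg D c != 0.
  case: (deg_edge dF) => e; rewrite inE => /orP[eD ce|/set1P ->].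
    exact: deg_in eD ce.
  case/set2P => cc; last by move: cx; rewrite cc eqxx.
  by rewrite cc; apply: (deg_in uvD); rewrite set21.
case: (W_ex dD) => e0 e0D ->.
case: (eqVneq e0 [set u; v]) => [->|e0uv].
  have HDK : (D :\ [set u; v]) :|: [set [set u; v]] = D by rewrite setUC setD1K.
  have -> : F = ((D :\ [set u; v]) :|: [set [set u; v]]) :|: [set [set u; x]] by rewrite HDK.
  apply: IHT.
  - by move: HD; rewrite (cardsD1 [set u; v] D) uvD.
  - by apply: simple_sub sD; apply: subD1.
  - move=> e; rewrite inE => /andP[ne eD]; apply/negP => ve.
    by move: ne; rewrite (lv _ eD ve) set11.
  - by move=> e; rewrite inE => /andP[_ /frx].
  - by [].
  - by [].
  - by [].
  - by [].
  - by [].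
  - case: (eqVneq c u) => [cu|cu].
      move: cond; rewrite cu eqxx /= => /exists_inP [e eD /andP [ue ne]].
      by apply: (deg_in (e := e)); rewrite // !inE ne eD.
    case: (deg_edge dD) => e eD ce; apply: (deg_in (e := e)) => //.
    rewrite !inE eD andbT; apply: contraNneq cu => ee.
    by move: ce; rewrite ee => /set2P [] // cv'; move: cv; rewrite cv' eqxx.
have e0F : e0 \in F by rewrite inE e0D.
apply: leq_trans (W_le_term c e0F) _; rewrite leq_add2l.
have e0ux : e0 != [set u; x] by apply: contraNneq uxD => <-.
rewrite /F setU1D1 //.
have sDe : D :\ e0 \subset D by apply: subD1.
have frx' : forall e, e \in D :\ e0 -> x \notin e by move=> e /(subsetP sDe) /frx.
have sub1 : forall f, f \in (D :\ e0) :|: [set [set u; x]] -> f \in D :\ e0 \/ f = [set u; x].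
  by move=> f; rewrite inE => /orP[H|/set1P]; [left|right].
have uvDe : [set u; v] \in D :\ e0 by rewrite !inE eq_sym e0uv uvD.
have lv' : forall e, e \in D :\ e0 -> v \in e -> e = [set u; v] by move=> e /(subsetP sDe) /lv.
have dv : deg (D :\ e0) v != 0 by apply: (deg_in uvDe); rewrite set22.
have leafv : cat_num ((D :\ e0) :|: [set [set u; x]]) v <= 1.
  apply: (leafcap (e := [set u; v])); [by rewrite inE uvDe | by rewrite set22 |].
  move=> f; rewrite inE => /orP[H|/set1P ->]; first exact: lv'.
  by case/set2P => vv; [move: uv | move: vx]; rewrite vv eqxx.
apply: V_le => c' cc' c'c.
have HP := leaf_path ux frx' sub1 cx cc'.
case: (eqVneq c' x) HP => [-> cu|c'x cc1].
  have cv2 : connect (adj (D :\ e0)) c v by apply: connect_trans cu (connect1 _).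
  apply: leq_trans (V_pos cv2 _ dv); last by rewrite eq_sym.
  apply: (leafcap (e := [set u; x])); rewrite ?inE ?eqxx ?orbT ?set22 //.
  by move=> f; rewrite inE => /orP[/frx' /negbTE -> //|/set1P -> //].
case: (eqVneq c' v) => [c'v|c'v].
  by apply: leq_trans (V_pos cc1 c'c _); rewrite -c'v in dv leafv.
apply: leq_trans (V_ge cc1 c'c).
apply: (IHC (D :\ e0) u v x c') => //.
- by move: HD; rewrite (cardsD1 e0 D) e0D.
- by apply: simple_sub sD.
- apply/implyP => /eqP c'u; case: (boolP [exists e in D :\ e0, (u \in e) && (e != [set u; v])]) => // Hno.
  have Hu : forall e, e \in D :\ e0 -> u \in e -> e = [set u; v].
    move=> e eD ue; apply/eqP; apply/negPn/negP => ne; move/negP: Hno; apply.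
    by apply/existsP; exists e; rewrite eD ue ne.
  have cuc : connect (adj (D :\ e0)) u c by rewrite connect_symE -c'u.
  case/set2P: (closed_uv lv' Hu cuc) => cc.
    by move: c'c; rewrite c'u cc eqxx.
  by move: cv; rewrite cc eqxx.
Qed.

Lemma CT n : forall (D : {set {set T}}) u v x c, #|D| < n -> Cst D u v x c.
Proof.
elim: n => [|n IH] //.
exact: C_step IH (T_step IH).
Qed.

End Basic.

Section Iso.
Variable T : finType.
Implicit Types (E : {set {set T}}).

Definition img E : {set {set option T}} := (fun e : {set T} => (@Some T) @: e) @: E.

Lemma Some_inj : injective (@Some T). Proof. by move=> a b []. Qed.

Lemma imS_inj : injective (fun e : {set T} => (@Some T) @: e).
Proof. exact: imset_inj Some_inj. Qed.

Lemma imS2 (a b : T) : (@Some T) @: [set a; b] = [set Some a; Some b].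
Proof. by rewrite imsetU !imset_set1. Qed.

Lemma mem_img E (e : {set T}) : (Some @: e \in img E) = (e \in E).
Proof. exact: (mem_imset _ _ imS_inj). Qed.

Lemma None_img E (f : {set option T}) : f \in img E -> None \notin f.
Proof. by case/imsetP => e _ ->; apply/negP => /imsetP [? _]. Qed.

Lemma img_D1 E (e : {set T}) : img (E :\ e) = img E :\ (Some @: e).
Proof.
apply/setP => f; apply/imsetP/idP => [[e' e'E ->]|].
  by move: e'E; rewrite !inE (inj_eq imS_inj) mem_img.
rewrite !inE => /andP[ne /imsetP [e' e'E fe]]; exists e' => //.
by rewrite !inE e'E andbT; apply: contraNneq ne => <-; rewrite fe.
Qed.

Lemma adj_img E a b : adj (img E) (Some a) (Some b) = adj E a b.
Proof. by rewrite /adj -imS2 mem_img. Qed.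

Lemma deg_img E a : (deg (img E) (Some a) == 0) = (deg E a == 0).
Proof.
apply/deg0P/deg0P => H e.
  by move=> eE; move: (H _ (imset_f _ eE)); rewrite (mem_imset _ _ Some_inj).
by case/imsetP => e' e'E ->; rewrite (mem_imset _ _ Some_inj); apply: H.
Qed.

Lemma conn_img E a c : connect (adj (img E)) (Some a) c ->
  exists2 b, c = Some b & connect (adj E) a b.
Proof.
apply: (connect_ind_gen (P := fun c => exists2 b, c = Some b & connect (adj E) a b)).
  by exists a => //; apply: connect0.
move=> y z [b -> ab]; case: z => [b'|].
  by rewrite adj_img => bb'; exists b' => //; apply: connect_trans ab (connect1 bb').
by move/None_img; rewrite !inE eqxx orbT.
Qed.

Lemma conn_img' E a b : connect (adj E) a b -> connect (adj (img E)) (Some a) (Some b).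
Proof.
apply: (connect_ind_gen (P := fun b => connect (adj (img E)) (Some a) (Some b))).
  exact: connect0.
by move=> y z ay yz; apply: connect_trans ay (connect1 _); rewrite adj_img.
Qed.

Lemma iso n : forall E a, #|E| <= n -> cat_num (img E) (Some a) = cat_num E a.
Proof.
elim: n => [|n IH] E a HE.
  have E0 : E = set0 by apply/eqP; rewrite -cards_eq0 -leqn0.
  have d0 : deg E a = 0 by apply/eqP/deg0P => e; rewrite E0 inE.
  by rewrite !W_deg0 //; apply/eqP; rewrite deg_img d0.
case: (boolP (deg E a == 0)) => [d0|d0].
  by rewrite !W_deg0 //; apply/eqP; rewrite ?deg_img.
have d0' : deg (img E) (Some a) != 0 by rewrite deg_img.
have Hsm e : e \in E -> #|E :\ e| <= n by move=> eE; move: HE; rewrite (cardsD1 e) eE.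
apply/eqP; rewrite eqn_leq; apply/andP; split.
  case: (W_ex d0) => e eE ->.
  have fE : Some @: e \in img E by rewrite mem_img.
  apply: leq_trans (W_le_term _ fE) _; rewrite leq_add2l -img_D1.
  apply: V_le => c' cc' c'a; case: (conn_img cc') => b cb ab.
  rewrite cb IH ?Hsm //; apply: V_ge => //; apply: contraNneq c'a => ba.
  by rewrite cb ba.
case: (W_ex d0') => f /imsetP [e eE ->] ->.
apply: leq_trans (W_le_term _ eE) _; rewrite leq_add2l -img_D1.
apply: V_le => b ab ba; rewrite -IH ?Hsm //; apply: V_ge; first exact: conn_img'.
by rewrite (inj_eq Some_inj).
Qed.

Lemma iso' E a : cat_num (img E) (Some a) = cat_num E a.
Proof. exact: (@iso #|E| E a (leqnn _)). Qed.

End Iso.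

Unset Implicit Arguments.

Theorem mainTheorem3 (T : finType) (E : {set {set T}}) (u v : T) :
  simple_graph E ->
  connected_graph E ->
  [set u; v] \in E ->
  2 <= deg E u ->
  deg E v = 1 ->
  (forall a : T, cat_num (add_leaf E u) (Some a) = cat_num E a) /\
  cat_num (add_leaf E u) None = 1 /\
  catG (add_leaf E u) = catG E.
Proof.
move=> sE _ uvE du dv.
have uv : u != v by move: (sE _ uvE); rewrite cards2; case: (u != v).
have lv : forall e, e \in E -> v \in e -> e = [set u; v].
  move: dv; rewrite /deg => /eqP /cards1P [e1 He1].
  have : [set u; v] \in [set e in E | v \in e] by rewrite inE uvE set22.
  rewrite He1 => /set1P uve1 e eE ve.
  have : e \in [set e in E | v \in e] by rewrite inE eE ve.
  by rewrite He1 uve1 => /set1P.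
have other : [exists e in E, (u \in e) && (e != [set u; v])].
  case: (boolP [exists e in E, (u \in e) && (e != [set u; v])]) => // Hno.
  have : [set e in E | u \in e] \subset [set [set u; v]].
    apply/subsetP => e; rewrite inE => /andP[eE ue]; rewrite inE.
    apply/negPn/negP => ne; move/negP: Hno; apply.
    by apply/existsP; exists e; rewrite eE ue ne.
  move/subset_leq_card; rewrite cards1 => H.
  by move: du; rewrite /deg; move=> H2; have := leq_trans H2 H.
have HG : add_leaf E u = img E :|: [set [set Some u; None]] by [].
have uxG : [set Some u; None] \in add_leaf E u by rewrite HG !inE eqxx orbT.
have uxI : [set Some u; None] \notin img E.
  by apply/negP => /None_img; rewrite !inE eqxx orbT.
have imgG : add_leaf E u :\ [set Some u; None] = img E by rewrite HG setU1D1K.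
have PA : forall a : T, cat_num (add_leaf E u) (Some a) = cat_num E a.
  move=> a; apply/eqP; rewrite eqn_leq; apply/andP; split; last first.
    by rewrite -(iso' E a) -imgG; apply: Mono uxG.
  case: (eqVneq a v) => [->|av].
    have dvE : deg E v != 0 by rewrite dv.
    apply: leq_trans (W_pos dvE).
    apply: (leafcap (e := [set Some u; Some v])); first by rewrite HG inE -imS2 mem_img uvE.
      by rewrite set22.
    move=> f; rewrite HG inE => /orP[/imsetP [e eE ->]|/set1P ->].
      by rewrite (mem_imset _ _ (@Some_inj T)) => ve; rewrite (lv _ eE ve) imS2.
    by case/set2P => // -[] vu; move: uv; rewrite vu eqxx.
  rewrite -(iso' E a) HG.
  apply: (@CT _ #|img E|.+1 (img E) (Some u) (Some v) None (Some a)) => //.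
  - by move=> f /imsetP [e eE ->]; rewrite (card_imset _ (@Some_inj T)); apply: sE.
  - by rewrite -imS2 mem_img.
  - move=> f /imsetP [e eE ->]; rewrite (mem_imset _ _ (@Some_inj T)) => ve.
    by rewrite (lv _ eE ve) imS2.
  - exact: None_img.
  - apply/implyP => _; case/exists_inP: other => e eE /andP[ue ne].
    apply/exists_inP; exists (Some @: e); first by rewrite mem_img.
    by rewrite (mem_imset _ _ (@Some_inj T)) ue -imS2 (inj_eq (@imS_inj T)).
have PB : cat_num (add_leaf E u) None = 1.
  apply/eqP; rewrite eqn_leq; apply/andP; split.
    apply: (leafcap uxG); first by rewrite set22.
    move=> f; rewrite HG inE => /orP[/None_img /negbTE -> //|/set1P -> //].
  by apply: W_pos; apply: (deg_in uxG); rewrite set22.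
split=> //; split=> //.
rewrite /catG; apply/eqP; rewrite eqn_leq; apply/andP; split.
  apply/bigmax_leqP => c _; case: c => [a|].
    by rewrite PA; apply: (leq_bigmax a).
  rewrite PB; apply: leq_trans (leq_bigmax u).
  by apply: W_pos; apply: (deg_in uvE); rewrite set21.
apply/bigmax_leqP => a _; rewrite -PA; apply: (leq_bigmax (Some a)).
Qed.
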